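(* Let $n\ge4$ be even and let $\varphi$ be a smooth skew-morphism of $D_n$ with $\mathrm{Ker}\,\varphi=\langle a^2\rangle$ and power function $\pi$; let $k$ be the order of $\varphi$. Then there exist integers $r,s\in\{0,\dots,n/2-1\}$, $u$ with $\gcd(u,n/2)=1$, and $e,f\in\{1,\dots,k-1\}$ such that for all integers $i$: $\varphi(a^{2i})=a^{2iu}$, $\varphi(a^{2i+1})=a^{2iu+2r+1}$, $\varphi(a^{2i}b)=a^{2iu+2s}b$, $\varphi(a^{2i+1}b)=a^{2iu+2r+2s\sigma(u,e)+1}b$, and $\pi(a^{2i})\equiv1$, $\pi(a^{2i+1})\equiv e$, $\pi(a^{2i}b)\equiv f$, $\pi(a^{2i+1}b)\equiv ef\pmod k$; and the following hold: (a) $k$ is the smallest positive integer with $r\sigma(u,k)\equiv0$ and $s\sigma(u,k)\equiv0\pmod{n/2}$; (b) $\gcd(e,k)=\gcd(f,k)=1$, $e\not\equiv1$, $f\not\equiv1$, $ef\not\equiv1$, $e^2\equiv1$, $f^2\equiv1\pmod k$; (c) $u^{e-1}\equiv1$ and $u^{f-1}\equiv1\pmod{n/2}$; (d) $r\sigma(u,e-1)\equiv u-2r-1\pmod{n/2}$; (e) $s\sigma(u,f-1)\equiv0\pmod{n/2}$; (f) $r\sigma(u,f-1)+s\sigma(u,e-1)\equiv u-2r-1\pmod{n/2}$.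
   Context: $D_n=\langle a,b\mid a^n=b^2=1,\ b^{-1}ab=a^{-1}\rangle$. A skew-morphism of a finite group $A$ is a permutation $\varphi$ of the set $A$ with $\varphi(1)=1$ for which there exists a function $\pi:A\to\mathbb{Z}_k$, where $k$ is the order of $\varphi$, such that $\varphi(xy)=\varphi(x)\varphi^{\pi(x)}(y)$ for all $x,y\in A$; $\pi$ is the power function. The kernel is $\mathrm{Ker}\,\varphi=\{x:\pi(x)=1\}$, and the core is $\mathrm{Core}\,\varphi=\bigcap_{i=1}^k\varphi^i(\mathrm{Ker}\,\varphi)$. $\varphi$ is smooth if $\varphi(x)\in x\,\mathrm{Core}\,\varphi$ for all $x$. For integers $u$ and $j\ge0$, $\sigma(u,j)=\sum_{i=1}^{j}u^{i-1}$ (so $\sigma(u,0)=0$). *)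

(* Defs.v *)
From HB Require Import structures.
From mathcomp Require Import all_boot all_order all_algebra all_fingroup.
Set Implicit Arguments.
Unset Strict Implicit.
Unset Printing Implicit Defensive.
Import GRing.Theory Num.Theory.

Definition zexp (gT : finGroupType) (x : gT) (z : int) : gT :=
  match z with
  | Posz m => (x ^+ m)%g
  | Negz m => (x ^- m.+1)%g
  end.

Definition sigma (u : int) (j : nat) : int := (\sum_(i < j) u ^+ i)%R.

(* The dihedral group D_n = <a, b | a^n = b^2 = 1, b^-1 a b = a^-1>,
   realised as a group D generated by a, b satisfying the relations with
   #[a] = n, #[b] = 2 and |D| = 2n (so D is isomorphic to the presented group).
   Note: in MathComp, a ^ b = b^-1 * a * b. *)
Definition dihedral (gT : finGroupType) (D : {group gT}) (a b : gT) (n : nat)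
  : Prop :=
  [/\ (D :=: <<[set a; b]>>)%g, #[a]%g = n, #[b]%g = 2,
      (a ^ b = a^-1)%g & #|D| = n.*2].

Definition perm_of_set (gT : finGroupType) (D : {set gT}) (phi : gT -> gT)
  : Prop :=
  {in D, forall x, phi x \in D} /\ {in D &, injective phi}.

Definition perm_order (gT : finGroupType) (D : {set gT}) (phi : gT -> gT)
  (k : nat) : Prop :=
  [/\ 0 < k, {in D, forall x, iter k phi x = x} &
      forall m, 0 < m -> {in D, forall x, iter m phi x = x} -> k <= m].

(* phi is a skew-morphism of D of order k with power function pi : D -> Z_k
   (Z_k represented by {0,...,k-1}). *)
Definition skew_morphism (gT : finGroupType) (D : {set gT}) (phi : gT -> gT)
  (pi : gT -> nat) (k : nat) : Prop :=
  [/\ perm_of_set D phi, phi 1%g = 1%g, perm_order D phi k,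
      {in D, forall x, pi x < k} &
      {in D &, forall x y, phi (x * y)%g = (phi x * iter (pi x) phi y)%g}].

Definition skew_kernel (gT : finGroupType) (D : {set gT}) (pi : gT -> nat)
  (k : nat) : {set gT} :=
  [set x in D | pi x %% k == 1 %% k].

Definition skew_core (gT : finGroupType) (D : {set gT}) (phi : gT -> gT)
  (pi : gT -> nat) (k : nat) : {set gT} :=
  \bigcap_(1 <= i < k.+1) [set iter i phi x | x in skew_kernel D pi k].

Definition smooth (gT : finGroupType) (D : {set gT}) (phi : gT -> gT)
  (pi : gT -> nat) (k : nat) : Prop :=
  {in D, forall x, phi x \in (x *: skew_core D phi pi k)%g}.

(* Main.v *)
Require Import Defs.
From HB Require Import structures.
From mathcomp Require Import all_boot all_order all_algebra all_fingroup.
From mathcomp Require Import cyclic zify ring.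
Import GRing.Theory Num.Theory.
Set Implicit Arguments. Unset Strict Implicit. Unset Printing Implicit Defensive.


Lemma sk_iter_in (gT : finGroupType) (D : {set gT}) (phi : gT -> gT) :
  perm_of_set D phi -> forall j x, x \in D -> iter j phi x \in D.
Proof. by move=> [Hin _] j x Hx; elim: j => [|j IH] //=; apply: Hin. Qed.

Lemma sk_iter_inj (gT : finGroupType) (D : {set gT}) (phi : gT -> gT) :
  perm_of_set D phi -> forall j, {in D &, injective (iter j phi)}.
Proof.
move=> Hp j; elim: j => [|j IH] x y Hx Hy //= H.
apply: IH => //; apply: (proj2 Hp) => //; exact: sk_iter_in.
Qed.

Lemma sk_iter_mulk (gT : finGroupType) (D : {set gT}) (phi : gT -> gT) k :
  perm_order D phi k -> forall q, {in D, forall x, iter (q * k) phi x = x}.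
Proof.
move=> [k0 Hk _] q x Hx; elim: q => [|q IH] //.
by rewrite mulSn iterD IH Hk.
Qed.

Lemma sk_iter_mod (gT : finGroupType) (D : {set gT}) (phi : gT -> gT) k :
  perm_of_set D phi -> perm_order D phi k ->
  forall j, {in D, forall x, iter j phi x = iter (j %% k) phi x}.
Proof.
move=> Hp Ho j x Hx; rewrite {1}(divn_eq j k) addnC iterD.
by rewrite (sk_iter_mulk Ho) //.
Qed.

Lemma sk_iter_uniq_lt (gT : finGroupType) (D : {set gT}) (phi : gT -> gT) k p q :
  perm_of_set D phi -> perm_order D phi k -> p < q -> q < k ->
  {in D, forall x, iter p phi x = iter q phi x} -> False.
Proof.
move=> Hp Ho Hlt Hqk H.
have : k <= q - p.
  case: Ho => _ _ Hmin; apply: Hmin; first by rewrite subn_gt0.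
  move=> x Hx; apply: (sk_iter_inj Hp (j := p)) => //; first exact: sk_iter_in.
  by rewrite -iterD addnC subnK ?(ltnW Hlt) // H.
lia.
Qed.

Lemma sk_iter_uniq (gT : finGroupType) (D : {set gT}) (phi : gT -> gT) k p q :
  perm_of_set D phi -> perm_order D phi k -> p < k -> q < k ->
  {in D, forall x, iter p phi x = iter q phi x} -> p = q.
Proof.
move=> Hp Ho Hpk Hqk H; case: (ltngtP p q) => // Hlt.
  by case: (sk_iter_uniq_lt Hp Ho Hlt Hqk H).
by case: (sk_iter_uniq_lt Hp Ho Hlt Hpk) => // x Hx; rewrite H.
Qed.

Lemma sk_iter_eq_mod (gT : finGroupType) (D : {set gT}) (phi : gT -> gT) k p q :
  perm_of_set D phi -> perm_order D phi k ->
  {in D, forall x, iter p phi x = iter q phi x} -> p = q %[mod k].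
Proof.
move=> Hp Ho H; have k0 : 0 < k by case: Ho.
apply: (sk_iter_uniq Hp Ho); rewrite ?ltn_pmod //.
by move=> x Hx; rewrite -!(sk_iter_mod Hp Ho) // H.
Qed.

Lemma sk_iter_mul (gT : finGroupType) (D : {set gT}) (phi : gT -> gT) pi k :
  skew_morphism D phi pi k -> forall j, {in D &, forall y z,
  iter j phi (y * z)%g = (iter j phi y * iter (\sum_(i < j) pi (iter i phi y)) phi z)%g}.
Proof.
move=> [Hp _ _ _ Hs] j y z Hy Hz; elim: j => [|j IH]; first by rewrite big_ord0.
rewrite /= IH Hs; try exact: sk_iter_in.
by rewrite -iterD big_ord_recr /= addnC.
Qed.

Lemma sk_pi_mul (gT : finGroupType) (D : {group gT}) (phi : gT -> gT) pi k :
  skew_morphism D phi pi k -> {in D &, forall x y,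
  pi (x * y)%g = \sum_(i < pi x) pi (iter i phi y) %[mod k]}.
Proof.
move=> Hsk x y Hx Hy; have [Hp _ Ho _ Hs] := Hsk.
have HD : {in D &, forall u v, (u * v)%g \in D}.
  by move=> u v Hu Hv; rewrite groupM.
apply: (sk_iter_eq_mod Hp Ho) => z Hz.
have E1 := Hs _ _ (HD _ _ Hx Hy) Hz.
rewrite -mulgA Hs // ?HD // (sk_iter_mul Hsk) // Hs // mulgA in E1.
by move/mulgI: E1 => /esym.
Qed.


Lemma zexpE (gT : finGroupType) (a : gT) (n : nat) : #[a]%g = n -> (0 < n)%N ->
  forall z : int, zexp a z = (a ^+ `|(z %% n)%Z|%N)%g.
Proof.
move=> Ha n0 [j|j] /=.
  by rewrite modz_nat absz_nat -Ha expg_mod_order.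
set N := `|(Negz j %% n)%Z|%N.
have n0' : (n%:Z != 0)%R by rewrite eqz_nat -lt0n.
have HN : (Posz N = Negz j %% n)%Z by rewrite /N gez0_abs // modz_ge0.
have Hd : (n %| j.+1 + N)%N.
  have E := divz_eq (Negz j) n.
  change (n%:Z %| (j.+1 + N)%:Z)%Z; apply/dvdzP; exists (- (Negz j %/ n)%Z)%R.
  rewrite PoszD HN; move: E; rewrite NegzE.
  move: (Negz j %/ n)%Z (Negz j %% n)%Z => q r E.
  have -> : r = (- (Posz j.+1) - q * n)%R by rewrite E; ring.
  ring.
apply/eqP; rewrite eq_invg_mul -expgD -order_dvdn Ha.
exact: Hd.
Qed.

Lemma abs_modz (z : int) (n : nat) : (0 < n)%N -> Posz `|(z %% n)%Z|%N = (z %% n)%Z.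
Proof. by move=> n0; rewrite gez0_abs // modz_ge0 // eqz_nat -lt0n. Qed.

Lemma abs_modz_lt (z : int) (n : nat) : (0 < n)%N -> (`|(z %% n)%Z|%N < n)%N.
Proof. by move=> n0; rewrite -ltz_nat abs_modz // ltz_pmod. Qed.

Lemma zexp_eq (gT : finGroupType) (a : gT) (n : nat) : #[a]%g = n -> (0 < n)%N ->
  forall x y : int, zexp a x = zexp a y <-> (x = y %[mod n])%Z.
Proof.
move=> Ha n0 x y; rewrite !(zexpE Ha n0); split; last by move=> ->.
move/eqP; rewrite eq_expg_mod_order Ha !modn_small ?abs_modz_lt // => /eqP H.
by rewrite -(abs_modz x n0) -(abs_modz y n0) H.
Qed.

Lemma zexpD (gT : finGroupType) (a : gT) (n : nat) : #[a]%g = n -> (0 < n)%N ->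
  forall x y : int, zexp a (x + y) = (zexp a x * zexp a y)%g.
Proof.
move=> Ha n0 x y.
have -> : (zexp a x * zexp a y)%g = zexp a (Posz (`|(x %% n)%Z| + `|(y %% n)%Z|)%N).
  by rewrite /= !(zexpE Ha n0) expgD.
apply/(zexp_eq Ha n0).
by rewrite PoszD !abs_modz // modzDm.
Qed.

Lemma zexp0 (gT : finGroupType) (a : gT) : zexp a 0 = 1%g.
Proof. by []. Qed.

Lemma zexpN (gT : finGroupType) (a : gT) (n : nat) : #[a]%g = n -> (0 < n)%N ->
  forall x : int, zexp a (- x) = (zexp a x)^-1%g.
Proof.
move=> Ha n0 x; apply/eqP; rewrite eq_sym eq_invg_mul -(zexpD Ha n0) subrr.
by [].
Qed.

Lemma inv_b (gT : finGroupType) (b : gT) : #[b]%g = 2 -> b^-1%g = b.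
Proof.
move=> Hb; apply/eqP; rewrite eq_invg_mul.
by have := expg_order b; rewrite Hb expgS expg1 => ->.
Qed.

Lemma dih_conj (gT : finGroupType) (a b : gT) (n : nat) : #[a]%g = n -> (0 < n)%N ->
  #[b]%g = 2 -> (a ^ b = a^-1)%g -> forall z, (b * zexp a z = zexp a (- z) * b)%g.
Proof.
move=> Ha n0 Hb Hab z.
have Hy : (b * zexp a z * b = (zexp a z)^-1)%g.
  rewrite (zexpE Ha n0) -{1}(inv_b Hb) -mulgA -conjgE conjXg Hab.
  by rewrite expgVn.
have bb : (b * b = 1)%g by rewrite -{1}(inv_b Hb) mulVg.
by rewrite (zexpN Ha n0) -Hy -!mulgA bb mulg1.
Qed.

Lemma b_notin (gT : finGroupType) (a b : gT) (n : nat) : #[a]%g = n -> (2 < n)%N ->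
  (a ^ b = a^-1)%g -> b \notin <[a]>%g.
Proof.
move=> Ha n2 Hab; apply/negP => /cycleP [j Hj].
have : (a ^ b = a)%g.
  rewrite Hj conjgE; have Hc : commute a (a ^+ j)%g by apply: commuteX.
  by rewrite Hc mulKg.
rewrite Hab => Haa.
have : (a ^+ 2 == 1)%g by rewrite expgS expg1 -{1}Haa mulVg.
rewrite -order_dvdn Ha => /dvdn_leq; lia.
Qed.

Lemma dih_decomp (gT : finGroupType) (D : {group gT}) (a b : gT) (n : nat) :
  (2 < n)%N -> dihedral D a b n ->
  forall x, x \in D -> exists i : nat, x = (a ^+ i)%g \/ x = (a ^+ i * b)%g.
Proof.
move=> n2 [HD Ha Hb Hab Hc] x Hx.
have aD : a \in D by rewrite HD mem_gen // !inE eqxx.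
have bD : b \in D by rewrite HD mem_gen // !inE eqxx orbT.
have bC := b_notin Ha n2 Hab.
set C := <[a]>%g.
have HI : C :&: (C :* b)%g = set0.
  apply/setP => y; rewrite !inE mem_rcoset; apply/negP => /andP [H1 H2].
  by move: bC; rewrite -[b]invgK groupV -(groupMl _ H1) H2.
have Hcard : #|C :|: (C :* b)%g| = n.*2.
  by have := cardsUI C (C :* b)%g; rewrite HI cards0 addn0 card_rcoset -addnn => ->; rewrite -Ha.
have Hsub : C :|: (C :* b)%g \subset D.
  apply/subsetP => y; rewrite !inE mem_rcoset => /orP [H|H].
    by move: H; apply/subsetP; rewrite cycle_subG.
  have -> : y = (y * b^-1 * b)%g by rewrite mulgKV.
  rewrite groupM //; move: H; apply/subsetP; rewrite cycle_subG //.
have HE : C :|: (C :* b)%g = D.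
  by apply/eqP; rewrite eqEcard Hsub Hcard Hc leqnn.
move: Hx; rewrite -HE !inE mem_rcoset => /orP [/cycleP [i ->]|/cycleP [i Hi]].
  by exists i; left.
by exists i; right; rewrite -Hi mulgKV.
Qed.


Lemma sigmaS (u : int) j : sigma u j.+1 = (1 + u * sigma u j)%R.
Proof.
rewrite /sigma big_ord_recl expr0 mulr_sumr; congr (_ + _)%R.
by apply: eq_bigr => i _; rewrite exprS.
Qed.

Lemma sigma_recr (u : int) j : sigma u j.+1 = (sigma u j + u ^+ j)%R.
Proof. by rewrite /sigma big_ord_recr. Qed.

Lemma sigma0 (u : int) : sigma u 0 = 0%R.
Proof. by rewrite /sigma big_ord0. Qed.

Lemma sigma_tel (u : int) j : ((u - 1) * sigma u j = u ^+ j - 1)%R.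
Proof.
elim: j => [|j IH]; first by rewrite sigma0 expr0 mulr0 subrr.
rewrite sigma_recr mulrDr IH exprS; ring.
Qed.

Lemma sum_const_nat (e f : nat) : (\sum_(i < e) f)%N = (e * f)%N.
Proof. by rewrite sum_nat_const card_ord. Qed.

Lemma dvd_comb2 (h A B c d : int) : (h %| A)%Z -> (h %| B)%Z -> (h %| (A * c + B * d)%R)%Z.
Proof. by move=> HA HB; apply: rpredD; apply: dvdz_mulr. Qed.

Lemma dvd_comb1 (h A c : int) : (h %| A)%Z -> (h %| (A * c)%R)%Z.
Proof. by move=> HA; rewrite dvdz_mulr. Qed.

Lemma zexp2_eq (gT : finGroupType) (a : gT) (m : nat) : #[a]%g = (2 * m)%N -> (0 < m)%N ->
  forall (X Y c : int), zexp a (2 * X + c)%R = zexp a (2 * Y + c)%R <-> (m %| (X - Y)%R)%Z.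
Proof.
move=> Ha m0 X Y c.
have n0 : (0 < 2 * m)%N by lia.
rewrite (zexp_eq Ha n0); split.
  move/eqP; rewrite eqz_mod_dvd PoszM.
  have -> : (2 * X + c - (2 * Y + c) = 2 * (X - Y))%R by ring.
  by rewrite dvdz_mul2l.
move=> H; apply/eqP; rewrite eqz_mod_dvd PoszM.
have -> : (2 * X + c - (2 * Y + c) = 2 * (X - Y))%R by ring.
by rewrite dvdz_mul2l.
Qed.

Lemma zexp2_eq0 (gT : finGroupType) (a : gT) (m : nat) : #[a]%g = (2 * m)%N -> (0 < m)%N ->
  forall (X Y : int), zexp a (2 * X)%R = zexp a (2 * Y)%R <-> (m %| (X - Y)%R)%Z.
Proof.
move=> Ha m0 X Y; rewrite -(zexp2_eq Ha m0 X Y 0) !addr0; by [].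
Qed.

Lemma powS_sub (u : int) (e : nat) : (0 < e)%N -> (u ^+ e = u * u ^+ (e - 1))%R.
Proof. by case: e => // e _; rewrite subSS subn0 exprS. Qed.

Lemma sigma_sub (u : int) (e : nat) : (0 < e)%N -> sigma u e = (sigma u (e - 1) + u ^+ (e - 1))%R.
Proof. by case: e => // e _; rewrite subSS subn0 sigma_recr. Qed.

Lemma bzb (gT : finGroupType) (a b : gT) (n : nat) : #[a]%g = n -> (0 < n)%N ->
  #[b]%g = 2 -> (a ^ b = a^-1)%g -> forall z, (b * (zexp a z * b) = zexp a (- z))%g.
Proof.
move=> Ha n0 Hb Hab z; rewrite mulgA (dih_conj Ha n0 Hb Hab) -mulgA.
by rewrite -{1}(inv_b Hb) mulVg mulg1.
Qed.

Lemma dvd_comb3 (h A B C c d g : int) : (h %| A)%Z -> (h %| B)%Z -> (h %| C)%Z ->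
  (h %| (A * c + B * d + C * g)%R)%Z.
Proof. by move=> HA HB HC; apply: rpredD; [apply: dvd_comb2|apply: dvdz_mulr]. Qed.

Lemma parity (gT : finGroupType) (a : gT) (i : nat) :
  exists t : int, (a ^+ i)%g = zexp a (2 * t)%R \/ (a ^+ i)%g = zexp a (2 * t + 1)%R.
Proof.
exists (Posz i./2); have Hi := odd_double_half i.
change (a ^+ i)%g with (zexp a (Posz i)).
case: (odd i) Hi => Hi; [right|left]; rewrite -{1}Hi; congr zexp;
  rewrite ?add0n -?mul2n ?PoszD ?PoszM /=; try ring.
Qed.

Unset Implicit Arguments. Set Strict Implicit. Set Printing Implicit Defensive.

Lemma dvd_mod (t : int) (m : nat) : (Posz m %| (t - (t %% m)%Z)%R)%Z.
Proof. by apply/dvdzP; exists (t %/ m)%Z; rewrite {1}(divz_eq t m); ring. Qed.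

Theorem theorem5 (gT : finGroupType) (D : {group gT}) (a b : gT) (n : nat)
    (phi : gT -> gT) (pi : gT -> nat) (k : nat) :
  4 <= n -> ~~ odd n -> dihedral D a b n ->
  skew_morphism D phi pi k -> smooth D phi pi k ->
  skew_kernel D pi k = <[(a ^+ 2)%g]>%g ->
  let h : int := Posz n./2 in
  exists (r s : nat) (u : int) (e f : nat),
    [/\ r < n./2, s < n./2, coprimez u h, 0 < e < k & 0 < f < k] /\
    (forall i : int,
      [/\ phi (zexp a (2 * i)%R) = zexp a (2 * i * u)%R,
          phi (zexp a (2 * i + 1)%R) = zexp a (2 * i * u + 2 * Posz r + 1)%R,
          phi (zexp a (2 * i)%R * b)%g = (zexp a (2 * i * u + 2 * Posz s)%R * b)%g
        & phi (zexp a (2 * i + 1)%R * b)%g =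
            (zexp a (2 * i * u + 2 * Posz r + 2 * Posz s * sigma u e + 1)%R * b)%g])
    /\
    (forall i : int,
      [/\ pi (zexp a (2 * i)%R) = 1 %[mod k],
          pi (zexp a (2 * i + 1)%R) = e %[mod k],
          pi (zexp a (2 * i)%R * b)%g = f %[mod k]
        & pi (zexp a (2 * i + 1)%R * b)%g = e * f %[mod k]])
    /\
    (* (a) *)
    (0 < k /\
     ((Posz r * sigma u k = 0 %[mod h])%Z /\ (Posz s * sigma u k = 0 %[mod h])%Z) /\
     (forall m : nat, 0 < m ->
          (Posz r * sigma u m = 0 %[mod h])%Z -> (Posz s * sigma u m = 0 %[mod h])%Z ->
          k <= m))
    /\
    (* (b) *)
    ([/\ coprime e k, coprime f k,
        e != 1 %[mod k], f != 1 %[mod k] & e * f != 1 %[mod k]] /\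
     (e ^ 2 = 1 %[mod k] /\ f ^ 2 = 1 %[mod k]))
    /\
    (* (c) *)
    ((u ^+ (e - 1) = 1 %[mod h])%Z /\ (u ^+ (f - 1) = 1 %[mod h])%Z)
    /\
    (* (d) *)
    (Posz r * sigma u (e - 1) = u - 2 * Posz r - 1 %[mod h])%Z
    /\
    (* (e) *)
    (Posz s * sigma u (f - 1) = 0 %[mod h])%Z
    /\
    (* (f) *)
    (Posz r * sigma u (f - 1) + Posz s * sigma u (e - 1) = u - 2 * Posz r - 1 %[mod h])%Z.

Proof.
move=> n4 nodd Hdih Hsk Hsm Hker h.
have [HD Ha Hb Hab Hc] := Hdih.
have [Hp phi1 Ho Hpik Hs] := Hsk.
have n0 : (0 < n)%N by lia.
have n2 : (2 < n)%N by lia.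
have k0 : (0 < k)%N by case: Ho.
have hn : n = (2 * n./2)%N by rewrite -{1}(odd_double_half n) (negbTE nodd) add0n -mul2n.
rewrite /h; clear h.
set m := n./2 in hn *.
have m0 : (0 < m)%N by lia.
have Ha2 : #[a]%g = (2 * m)%N by rewrite Ha {1}hn.
have aD : a \in D by rewrite HD mem_gen // !inE eqxx.
have bD : b \in D by rewrite HD mem_gen // !inE eqxx orbT.
have ZD := zexpD Ha n0.
have Zeq2 := zexp2_eq Ha2 m0.
have Zeq0 := zexp2_eq0 Ha2 m0.
have Za : zexp a 1 = a by rewrite /= expg1.
have zD : forall z, zexp a z \in D by move=> z; rewrite (zexpE Ha n0) groupX.
have HKer : forall x, x \in <[a ^+ 2]>%g -> exists j : nat, x = zexp a (2 * Posz j)%R.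
  move=> x /cycleP [j ->]; exists j.
  have -> : (2 * Posz j = Posz (2 * j))%R by rewrite PoszM.
  by rewrite /= expgM.
have EK : forall t : int, zexp a (2 * t)%R \in <[a ^+ 2]>%g.
  move=> t; have -> : zexp a (2 * t)%R = zexp a (2 * Posz `|(t %% m)%Z|%N)%R.
    by apply/Zeq0; rewrite abs_modz // dvd_mod.
  set j := `|(t %% m)%Z|%N.
  have -> : (2 * Posz j = Posz (2 * j))%R by rewrite PoszM.
  by rewrite /= expgM mem_cycle.
have K_C : forall x, x \in <[a ^+ 2]>%g -> x \in <[a]>%g.
  by apply/subsetP; rewrite cycle_subG mem_cycle.
have bC := b_notin Ha n2 Hab.
have aK : a \notin <[a ^+ 2]>%g.
  apply/negP => /HKer [j Hj].
  move: Hj; rewrite -{1}Za => /(zexp_eq Ha n0) /eqP; rewrite eqz_mod_dvd => Hd.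
  have : (2 %| (1 - 2 * Posz j)%R)%Z.
    by apply: dvdz_trans Hd; rewrite hn PoszM dvdz_mulr.
  move=> H2; clear -H2; lia.
have bK : b \notin <[a ^+ 2]>%g by apply/negP => /K_C; apply/negP.
have abK : (a * b)%g \notin <[a ^+ 2]>%g.
  by apply/negP => /K_C; rewrite groupMl ?cycle_id //; apply/negP.
have k2 : (1 < k)%N.
  case: (ltngtP k 1) => // Hk1; first by clear -k0 Hk1; lia.
  move: aK; rewrite -Hker inE aD Hk1 !modn1 eqxx.
  by [].
have piK : forall t, pi (zexp a (2 * t)%R) = 1%N.
  move=> t; have := EK t; rewrite -Hker inE => /andP [_ /eqP].
  by rewrite !modn_small ?Hpik.
have phiK : forall t y, y \in D -> phi (zexp a (2 * t)%R * y)%g = (phi (zexp a (2 * t)%R) * phi y)%g.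
  by move=> t y yD; rewrite Hs // piK.
have piKy : forall t y, y \in D -> pi (zexp a (2 * t)%R * y)%g = pi y.
  move=> t y yD; have := sk_pi_mul Hsk (zD (2 * t)%R) yD.
  by rewrite piK big_ord1 /= !modn_small ?Hpik // groupM.
have smooth' : forall x, x \in D -> exists j : nat, phi x = (x * zexp a (2 * Posz j)%R)%g.
  move=> x xD; have := Hsm x xD; rewrite mem_lcoset => Hco.
  have : (x^-1 * phi x)%g \in skew_kernel D pi k.
    move: Hco; rewrite /skew_core big_nat_recr //= inE => /andP [_ /imsetP [y yK ->]].
    have yD : y \in D by move: yK; rewrite inE => /andP [].
    by case: Ho => _ Hk _; rewrite Hk.
  rewrite Hker => /HKer [j Hj]; exists j; by rewrite -Hj mulKVg.
have [j0 Hj0] := smooth' _ (zD 2%R).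
set u' := j0.+1.
pose u : int := Posz u'.
have phiE1 : phi (zexp a 2%R) = zexp a (2 * u)%R.
  by rewrite Hj0 -ZD /u /u'; congr zexp; rewrite intS; ring.
have FE_nat : forall j : nat, phi (zexp a (2 * Posz j)%R) = zexp a (2 * Posz j * u)%R.
  elim=> [|j IH]; first by rewrite !(mulr0, mul0r) /= expg0 phi1.
  have -> : zexp a (2 * Posz j.+1)%R = (zexp a (2 * Posz j)%R * zexp a (2 * 1)%R)%g.
    by rewrite -ZD; congr zexp; rewrite intS; ring.
  rewrite phiK ?zD // IH mulr1 phiE1 -ZD; congr zexp; rewrite intS; ring.
have FE : forall t : int, phi (zexp a (2 * t)%R) = zexp a (2 * t * u)%R.
  move=> t; set j := `|(t %% m)%Z|%N.
  have Ht : (Posz m %| (t - Posz j)%R)%Z by rewrite /j abs_modz // dvd_mod.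
  have -> : zexp a (2 * t)%R = zexp a (2 * Posz j)%R by apply/Zeq0.
  rewrite FE_nat -!mulrA; apply/Zeq0.
  have -> : (Posz j * u - t * u = - ((t - Posz j) * u))%R by ring.
  by rewrite rpredN dvdz_mulr.
have cop : coprime u' m.
  set g := gcdn u' m.
  have g0 : (0 < g)%N by rewrite gcdn_gt0 m0 orbT.
  have gm : (g %| m)%N := dvdn_gcdr u' m.
  have gu : (g %| u')%N := dvdn_gcdl u' m.
  set x := (m %/ g)%N.
  have x0 : (0 < x)%N by rewrite divn_gt0 // dvdn_leq.
  have Hx : zexp a (2 * Posz x)%R = zexp a (2 * 0)%R.
    apply: (sk_iter_inj Hp (j := 1)); rewrite ?zD //.
    change (phi (zexp a (2 * Posz x)%R) = phi (zexp a (2 * 0)%R)).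
    rewrite !FE -!mulrA; apply/Zeq0; rewrite mul0r subr0 -PoszM.
    by apply/dvdnP; exists (u' %/ g)%N; rewrite /x -{1}(divnK gu) mulnCA divnK.
  move/Zeq0: Hx; rewrite subr0 => Hx.
  have Hmx : (m <= x)%N by apply: dvdn_leq.
  rewrite /coprime; apply/eqP; case: (ltngtP g 1) => // Hg; first by clear -g0 Hg; lia.
  have := ltn_Pdiv Hg m0; rewrite -/x => Hlt; clear -Hlt Hmx; lia.
have copz : coprimez (Posz m) u by rewrite coprimezE /= coprime_sym.
have [j1 Hj1] := smooth' _ aD.
have [j2 Hj2] := smooth' _ bD.
set r := `|((Posz j1) %% m)%Z|%N.
set s := `|((- Posz j2) %% m)%Z|%N.
have rm : (r < m)%N by apply: abs_modz_lt.
have sm : (s < m)%N by apply: abs_modz_lt.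
have phia : phi a = zexp a (2 * Posz r + 1)%R.
  rewrite Hj1 -{1}Za -ZD addrC; apply/Zeq2.
  by rewrite /r abs_modz // dvd_mod.
have phib : phi b = (zexp a (2 * Posz s)%R * b)%g.
  rewrite Hj2 (dih_conj Ha n0 Hb Hab); congr (_ * _)%g; rewrite -mulrN; apply/Zeq0.
  by rewrite /s abs_modz // dvd_mod.
have FO : forall t, phi (zexp a (2 * t + 1)%R) = zexp a (2 * (t * u + Posz r) + 1)%R.
  move=> t; rewrite ZD Za phiK // FE phia -ZD; congr zexp; ring.
have FEb : forall t, phi (zexp a (2 * t)%R * b)%g = (zexp a (2 * (t * u + Posz s))%R * b)%g.
  move=> t; rewrite phiK // FE phib mulgA -ZD; congr (zexp _ _ * _)%g; ring.
have Ib : forall j : nat, iter j phi b = (zexp a (2 * (Posz s * sigma u j))%R * b)%g.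
  elim=> [|j IH]; first by rewrite sigma0 !mulr0 /= expg0 mul1g.
  by rewrite iterS IH FEb sigmaS; congr (zexp _ _ * _)%g; ring.
have IO : forall (j : nat) t, iter j phi (zexp a (2 * t + 1)%R) = zexp a (2 * (t * u ^+ j + Posz r * sigma u j) + 1)%R.
  elim=> [|j IH] t; first by rewrite sigma0 expr0 mulr1 mulr0 addr0.
  by rewrite iterS IH FO sigmaS exprS; congr zexp; ring.
have IE : forall (j : nat) t, iter j phi (zexp a (2 * t)%R) = zexp a (2 * (t * u ^+ j))%R.
  elim=> [|j IH] t; first by rewrite expr0 mulr1.
  by rewrite iterS IH FE exprS; congr zexp; ring.
have IEb : forall (j : nat) t, iter j phi (zexp a (2 * t)%R * b)%g = (zexp a (2 * (t * u ^+ j + Posz s * sigma u j))%R * b)%g.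
  elim=> [|j IH] t; first by rewrite sigma0 expr0 mulr1 mulr0 addr0.
  by rewrite iterS IH FEb sigmaS exprS; congr (zexp _ _ * _)%g; ring.
set e := pi a.
set f := pi b.
have phiab : phi (a * b)%g = (zexp a (2 * (Posz r + Posz s * sigma u e) + 1)%R * b)%g.
  rewrite Hs // phia Ib mulgA -ZD; congr (zexp _ _ * _)%g; ring.
have FOb : forall t, phi (zexp a (2 * t + 1)%R * b)%g = (zexp a (2 * (t * u + Posz r + Posz s * sigma u e) + 1)%R * b)%g.
  move=> t; have -> : (zexp a (2 * t + 1)%R * b = zexp a (2 * t)%R * (a * b))%g by rewrite ZD Za mulgA.
  rewrite phiK ?groupM // FE phiab mulgA -ZD; congr (zexp _ _ * _)%g; ring.
have IOb : forall (j : nat) t, iter j phi (zexp a (2 * t + 1)%R * b)%g = (zexp a (2 * (t * u ^+ j + (Posz r + Posz s * sigma u e) * sigma u j) + 1)%R * b)%g.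
  elim=> [|j IH] t; first by rewrite sigma0 expr0 mulr1 mulr0 addr0.
  by rewrite iterS IH FOb sigmaS exprS; congr (zexp _ _ * _)%g; ring.
have DC := dih_conj Ha n0 Hb Hab.
have BZB := bzb Ha n0 Hb Hab.
have Za0 : a = zexp a (2 * 0 + 1)%R by rewrite mulr0 add0r Za.
have piO : forall t, pi (zexp a (2 * t + 1)%R) = e by move=> t; rewrite ZD Za piKy.
have piEb : forall t, pi (zexp a (2 * t)%R * b)%g = f by move=> t; rewrite piKy.
have piIb : forall i, pi (iter i phi b) = f by move=> i; rewrite Ib piEb.
have IOa : forall j : nat, iter j phi a = zexp a (2 * (Posz r * sigma u j) + 1)%R.
  by move=> j; rewrite {1}Za0 IO; congr zexp; ring.
have piIa : forall i, pi (iter i phi a) = e by move=> i; rewrite IOa piO.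
have piab : pi (a * b)%g = (e * f)%N %[mod k].
  rewrite (sk_pi_mul Hsk aD bD) -/e (eq_bigr (fun _ => f)) ?sum_const_nat //.
have piOb : forall t, pi (zexp a (2 * t + 1)%R * b)%g = pi (a * b)%g.
  by move=> t; rewrite ZD Za -mulgA piKy // groupM.
have aa : (a * a)%g = zexp a (2 * 1)%R by rewrite mulr1 /= expgS expg1.
have bb : (b * b)%g = zexp a (2 * 0)%R by rewrite mulr0 /= expg0 -{1}(inv_b Hb) mulVg.
have e2 : (1 = e * e %[mod k])%N.
  have := sk_pi_mul Hsk aD aD; rewrite -/e (eq_bigr (fun _ => e)) ?sum_const_nat.
    by rewrite aa piK.
  by move=> i _; exact: piIa.
have f2 : (1 = f * f %[mod k])%N.
  have := sk_pi_mul Hsk bD bD; rewrite -/f (eq_bigr (fun _ => f)) ?sum_const_nat.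
    by rewrite bb piK.
  by move=> i _; exact: piIb.
have ne1 : (e != 1 %[mod k])%N.
  by apply/negP => He; move: aK; rewrite -Hker inE aD /= He.
have nf1 : (f != 1 %[mod k])%N.
  by apply/negP => He; move: bK; rewrite -Hker inE bD /= He.
have nef1 : (e * f != 1 %[mod k])%N.
  by apply/negP => He; move: abK; rewrite -Hker inE groupM //= piab He.
have copE : coprime e k.
  have : coprime (e * e) k by rewrite -coprime_modl -e2 coprime_modl coprime1n.
  by rewrite coprimeMl => /andP [].
have copF : coprime f k.
  have : coprime (f * f) k by rewrite -coprime_modl -f2 coprime_modl coprime1n.
  by rewrite coprimeMl => /andP [].
have e0 : (0 < e)%N.
  rewrite lt0n; apply/negP => /eqP E0; move: copE; rewrite E0 /coprime gcd0n => /eqP Hk1; clear -Hk1 k2; lia.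
have f0 : (0 < f)%N.
  rewrite lt0n; apply/negP => /eqP E0; move: copF; rewrite E0 /coprime gcd0n => /eqP Hk1; clear -Hk1 k2; lia.
have ek : (e < k)%N by apply: Hpik.
have fk : (f < k)%N by apply: Hpik.
have Hce : (Posz m %| (Posz r + u ^+ e - (u + Posz r))%R)%Z.
  apply/(Zeq2 _ _ 1).
  transitivity (phi (a * zexp a (2 * 1)%R)%g).
    by rewrite Hs ?zD // phia IE -ZD; congr zexp; ring.
  have -> : (a * zexp a (2 * 1)%R = zexp a (2 * 1)%R * a)%g by rewrite -{1 4}Za -!ZD addrC.
  by rewrite phiK // FE phia -ZD; congr zexp; ring.
have Hcf : (Posz m %| (Posz s - u ^+ f - (-1 * u + Posz s))%R)%Z.
  apply/Zeq0; apply: (mulIg b).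
  transitivity (phi (b * zexp a (2 * 1)%R)%g).
    by rewrite Hs ?zD // phib IE -mulgA DC mulgA -ZD; congr (zexp _ _ * _)%g; ring.
  have -> : (b * zexp a (2 * 1)%R = zexp a (2 * (-1))%R * b)%g by rewrite DC; congr (zexp _ _ * _)%g; ring.
  by rewrite FEb.
have ue1 : (Posz m %| (u ^+ (e - 1) - 1)%R)%Z.
  rewrite -(Gauss_dvdzr _ copz).
  have -> : (u * (u ^+ (e - 1) - 1) = Posz r + u ^+ e - (u + Posz r))%R.
    by rewrite (powS_sub u e0); move: (u ^+ (e - 1)%N)%R => U; ring.
  by [].
have uf1 : (Posz m %| (u ^+ (f - 1) - 1)%R)%Z.
  rewrite -(Gauss_dvdzr _ copz).
  have -> : (u * (u ^+ (f - 1) - 1) = - (Posz s - u ^+ f - (-1 * u + Posz s)))%R by rewrite (powS_sub u f0); move: (u ^+ (f - 1)%N)%R => U; ring.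
  by rewrite rpredN.
have Hd : (Posz m %| (Posz r + Posz r * sigma u e + 1 - 1 * u)%R)%Z.
  apply/Zeq0.
  transitivity (phi (a * a)%g).
    by rewrite Hs // phia IOa -ZD; congr zexp; ring.
  by rewrite aa FE; congr zexp; ring.
have He : (Posz m %| (Posz s - Posz s * sigma u f - 0 * u)%R)%Z.
  apply/Zeq0.
  transitivity (phi (b * b)%g).
    by rewrite Hs // phib Ib -mulgA BZB -ZD; congr zexp; ring.
  by rewrite bb FE; congr zexp; ring.
have Hf : (Posz m %| (Posz r + Posz s * sigma u e - (Posz s + u ^+ f - Posz r * sigma u f - 1))%R)%Z.
  apply/(Zeq2 _ _ 1); apply: (mulIg b).
  transitivity (phi (a * b)%g); first by rewrite phiab.
  have -> : (a * b = b * zexp a (2 * (-1) + 1)%R)%g.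
    by rewrite DC -{1}Za; congr (zexp _ _ * _)%g; ring.
  by rewrite Hs ?zD // phib IO -mulgA DC mulgA -ZD; congr (zexp _ _ * _)%g; ring.
have Hk : forall x, x \in D -> iter k phi x = x by case: Ho.
have dme : forall (x y : int), (Posz m %| (x - y)%R)%Z -> (x = y %[mod Posz m])%Z.
  by move=> x y H; apply/eqP; rewrite eqz_mod_dvd.
have Hrk : (Posz m %| (Posz r * sigma u k)%R)%Z.
  have H := Hk a aD; rewrite IOa in H.
  have : zexp a (2 * (Posz r * sigma u k) + 1)%R = zexp a (2 * 0 + 1)%R by rewrite H -Za0.
  by move/(Zeq2 _ _ 1); rewrite subr0.
have Hsk' : (Posz m %| (Posz s * sigma u k)%R)%Z.
  have H := Hk b bD; rewrite Ib in H.
  have : (zexp a (2 * (Posz s * sigma u k))%R * b = zexp a (2 * 0)%R * b)%g.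
    by rewrite H mulr0 /= expg0 mul1g.
  by move/mulIg/Zeq0; rewrite subr0.
have D1 : (Posz m %| (Posz r * sigma u (e - 1) - (u - 2 * Posz r - 1))%R)%Z.
  have -> : (Posz r * sigma u (e - 1) - (u - 2 * Posz r - 1) =
     (Posz r + Posz r * sigma u e + 1 - 1 * u) * 1 + (u ^+ (e - 1) - 1) * (- Posz r))%R.
    by rewrite (sigma_sub u e0); ring.
  exact: dvd_comb2.
have E1 : (Posz m %| (Posz s * sigma u (f - 1) - 0)%R)%Z.
  have -> : (Posz s * sigma u (f - 1) - 0 =
     (Posz s - Posz s * sigma u f - 0 * u) * (-1) + (u ^+ (f - 1) - 1) * (- Posz s))%R.
    by rewrite (sigma_sub u f0); ring.
  exact: dvd_comb2.
have F1 : (Posz m %| (Posz r * sigma u (f - 1) + Posz s * sigma u (e - 1) - (u - 2 * Posz r - 1))%R)%Z.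
  have -> : (Posz r * sigma u (f - 1) + Posz s * sigma u (e - 1) - (u - 2 * Posz r - 1) =
     (Posz r + Posz s * sigma u e - (Posz s + u ^+ f - Posz r * sigma u f - 1)) * 1
     + (u ^+ (e - 1) - 1) * (- Posz s) + (u ^+ (f - 1) - 1) * (u - Posz r))%R.
    by rewrite (sigma_sub u e0) (sigma_sub u f0) (powS_sub u f0); ring.
  exact: dvd_comb3.
have Hmin : forall j : nat, (0 < j)%N -> (Posz r * sigma u j = 0 %[mod Posz m])%Z ->
    (Posz s * sigma u j = 0 %[mod Posz m])%Z -> (k <= j)%N.
  move=> j jpos /eqP Hr /eqP Hs'; rewrite eqz_mod_dvd subr0 in Hr; rewrite eqz_mod_dvd subr0 in Hs'.
  have Hu1 : (Posz m %| (u ^+ j - 1)%R)%Z.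
    rewrite -sigma_tel.
    have -> : ((u - 1) * sigma u j = (Posz r * sigma u (e - 1) - (u - 2 * Posz r - 1)) * (- sigma u j)
       + (Posz r * sigma u j) * (sigma u (e - 1) + 2))%R by ring.
    exact: dvd_comb2.
  case: Ho => _ _ Hmin'; apply: Hmin' => // x xD.
  have [i [->|->]] := dih_decomp n2 Hdih xD; have [t [->|->]] := parity a i.
  - rewrite IE; apply/Zeq0.
    have -> : (t * u ^+ j - t = (u ^+ j - 1) * t)%R by ring.
    exact: dvdz_mulr.
  - rewrite IO; apply/(Zeq2 _ _ 1).
    have -> : (t * u ^+ j + Posz r * sigma u j - t = (u ^+ j - 1) * t + (Posz r * sigma u j) * 1)%R by ring.
    exact: dvd_comb2.
  - rewrite IEb; congr (_ * _)%g; apply/Zeq0.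
    have -> : (t * u ^+ j + Posz s * sigma u j - t = (u ^+ j - 1) * t + (Posz s * sigma u j) * 1)%R by ring.
    exact: dvd_comb2.
  - rewrite IOb; congr (_ * _)%g; apply/(Zeq2 _ _ 1).
    have -> : (t * u ^+ j + (Posz r + Posz s * sigma u e) * sigma u j - t =
      (u ^+ j - 1) * t + (Posz r * sigma u j) * 1 + (Posz s * sigma u j) * sigma u e)%R by ring.
    exact: dvd_comb3.
exists r, s, u, e, f.
split.
  by split; [exact: rm | exact: sm | rewrite coprimez_sym | rewrite e0 ek | rewrite f0 fk].
split.
  move=> i; split.
  - exact: FE.
  - by rewrite FO; congr zexp; ring.
  - by rewrite FEb; congr (zexp _ _ * _)%g; ring.
  - by rewrite FOb; congr (zexp _ _ * _)%g; ring.
split.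
  move=> i; split.
  - by rewrite piK.
  - by rewrite piO.
  - by rewrite piEb.
  - by rewrite piOb piab.
split.
  split; first exact: k0.
  split; last exact: Hmin.
  by split; apply: dme; rewrite subr0.
split.
  split; first by split.
  by split; rewrite -mulnn; [rewrite -e2 | rewrite -f2].
split; first by split; apply: dme.
split; first exact: dme.
split; first exact: dme.
exact: dme.
Qed.
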